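(* Let $(\mathcal M,\circ,I,\bullet,J)$ be a duoidal category and let $A$ be a bimonoid in it, i.e. an object with a monoid structure $(\mu:A\circ A\to A,\ \eta:I\to A)$ in $(\mathcal M,\circ,I)$ and a comonoid structure $(\Delta:A\to A\bullet A,\ \varepsilon:A\to J)$ in $(\mathcal M,\bullet,J)$ such that $\Delta\cdot\mu=(\mu\bullet\mu)\cdot\zeta_{A,A,A,A}\cdot(\Delta\circ\Delta)$, $\Delta\cdot\eta=(\eta\bullet\eta)\cdot\delta$, $\varepsilon\cdot\mu=\varpi\cdot(\varepsilon\circ\varepsilon)$ and $\varepsilon\cdot\eta=\tau$. Then $A$ is a right weak bimonoid, i.e. it satisfies the axioms (WB), (RRU), (LRU), (LRC) and (LLC) listed in the context.
   Context: Composition of morphisms is written $g\cdot f$ ($f$ first). Associativity and unit isomorphisms of both monoidal products are suppressed (e.g. $X\circ I=X$, $J\bullet X=X$). A duoidal category $(\mathcal M,\circ,I,\bullet,J)$ is a category $\mathcal M$ with two monoidal structures $(\circ,I)$ and $(\bullet,J)$, morphisms $\delta:I\to I\bullet I$, $\varpi:J\circ J\to J$, $\tau:I\to J$, and a natural transformation $\zeta_{A,B,C,D}:(A\bullet B)\circ(C\bullet D)\to(A\circ C)\bullet(B\circ D)$ such that: $(J,\varpi,\tau)$ is a monoid in $(\mathcal M,\circ,I)$; $(I,\delta,\tau)$ is a comonoid in $(\mathcal M,\bullet,J)$; for all objects, $\zeta_{A,B,C\circ E,D\circ F}\cdot((A\bullet B)\circ\zeta_{C,D,E,F})=\zeta_{A\circ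 C,B\circ D,E,F}\cdot(\zeta_{A,B,C,D}\circ(E\bullet F))$ and $((A\circ D)\bullet\zeta_{B,C,E,F})\cdot\zeta_{A,B\bullet C,D,E\bullet F}=(\zeta_{A,B,D,E}\bullet(C\circ F))\cdot\zeta_{A\bullet B,C,D\bullet E,F}$; and $\zeta_{I,I,A,B}\cdot(\delta\circ(A\bullet B))=\mathrm{id}_{A\bullet B}=\zeta_{A,B,I,I}\cdot((A\bullet B)\circ\delta)$, $(\varpi\bullet(A\circ B))\cdot\zeta_{J,A,J,B}=\mathrm{id}_{A\circ B}=((A\circ B)\bullet\varpi)\cdot\zeta_{A,J,B,J}$. For $A$ with monoid structure $(\mu,\eta)$ in $(\mathcal M,\circ,I)$ and comonoid structure $(\Delta,\varepsilon)$ in $(\mathcal M,\bullet,J)$, put $e:=\Delta\cdot\eta:I\to A\bullet A$ and $\bar\mu:=\varepsilon\cdot\mu:A\circ A\to J$. The axioms are: (WB) $\Delta\cdot\mu=(\mu\bullet\mu)\cdot\zeta_{A,A,A,A}\cdot(\Delta\circ\Delta)$. (RRU) $(I\bullet A\bullet\mu\bullet A)\cdot(\zeta_{I,A,I\bullet A,A}\bullet A)\cdot(((I\bullet A)\circ(I\bullet e))\bullet A)\cdot(((I\bullet A)\circ\delta)\bullet A)\cdot(I\bullet e)\cdot\delta=(I\bullet A\bullet\Delta)\cdot(I\bullet\Delta)\cdot(I\bullet\eta)\cdot\delta$ as morphisms $I\to I\bullet A\bullet A\bullet A$. (LRU) $(A\bullet\mu\bullet A\bullet I)\cdot(A\bullet\zeta_{A,I,A,A\bullet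 I})\cdot(A\bullet((A\bullet I)\circ(e\bullet I)))\cdot(A\bullet((A\bullet I)\circ\delta))\cdot(e\bullet I)\cdot\delta=(\Delta\bullet A\bullet I)\cdot(\Delta\bullet I)\cdot(\eta\bullet I)\cdot\delta$ as morphisms $I\to A\bullet A\bullet A\bullet I$. (LRC) $\varpi\cdot(J\circ\bar\mu)\cdot((\varpi\bullet(J\circ A))\circ A)\cdot(((J\circ\bar\mu)\bullet(J\circ A))\circ A)\cdot(\zeta_{J\circ A,J,A,A}\circ A)\cdot(J\circ A\circ\Delta\circ A)=\varpi\cdot(J\circ\varepsilon)\cdot(J\circ\mu)\cdot(J\circ A\circ\mu)$ as morphisms $J\circ A\circ A\circ A\to J$. (LLC) $\varpi\cdot(J\circ\bar\mu)\cdot(((J\circ A)\bullet\varpi)\circ A)\cdot(((J\circ A)\bullet(J\circ\bar\mu))\circ A)\cdot(\zeta_{J,J\circ A,A,A}\circ A)\cdot(J\circ A\circ\Delta\circ A)=\varpi\cdot(J\circ\varepsilon)\cdot(J\circ\mu)\cdot(J\circ A\circ\mu)$. *)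

(* Defs.v *)
(* A category is presented "arrows-only": a type of objects, a type of
   morphisms with domain/codomain, identities and composition
   [comp g f] = g . f (f first), whose axioms are required for composable
   pairs.  Both monoidal structures are STRICT (the paper suppresses the
   associativity and unit isomorphisms), so the strictness equations hold on
   objects and on morphisms. *)

Record Duoidal := {
  Ob : Type;
  Mor : Type;
  dom : Mor -> Ob;
  cod : Mor -> Ob;
  idm : Ob -> Mor;
  comp : Mor -> Mor -> Mor;
  dom_idm : forall X, dom (idm X) = X;
  cod_idm : forall X, cod (idm X) = X;
  dom_comp : forall g f, cod f = dom g -> dom (comp g f) = dom f;
  cod_comp : forall g f, cod f = dom g -> cod (comp g f) = cod g;
  comp_idm_r : forall f, comp f (idm (dom f)) = f;
  comp_idm_l : forall f, comp (idm (cod f)) f = f;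
  comp_assoc : forall h g f, cod f = dom g -> cod g = dom h ->
    comp h (comp g f) = comp (comp h g) f;

  oO : Ob -> Ob -> Ob;
  mO : Mor -> Mor -> Mor;
  I : Ob;
  dom_mO : forall f g, dom (mO f g) = oO (dom f) (dom g);
  cod_mO : forall f g, cod (mO f g) = oO (cod f) (cod g);
  mO_idm : forall X Y, mO (idm X) (idm Y) = idm (oO X Y);
  mO_comp : forall g f g' f', cod f = dom g -> cod f' = dom g' ->
    mO (comp g f) (comp g' f') = comp (mO g g') (mO f f');
  oO_assoc : forall X Y Z, oO (oO X Y) Z = oO X (oO Y Z);
  mO_assoc : forall f g h, mO (mO f g) h = mO f (mO g h);
  oO_unitl : forall X, oO I X = X;
  oO_unitr : forall X, oO X I = X;
  mO_unitl : forall f, mO (idm I) f = f;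
  mO_unitr : forall f, mO f (idm I) = f;

  oB : Ob -> Ob -> Ob;
  mB : Mor -> Mor -> Mor;
  J : Ob;
  dom_mB : forall f g, dom (mB f g) = oB (dom f) (dom g);
  cod_mB : forall f g, cod (mB f g) = oB (cod f) (cod g);
  mB_idm : forall X Y, mB (idm X) (idm Y) = idm (oB X Y);
  mB_comp : forall g f g' f', cod f = dom g -> cod f' = dom g' ->
    mB (comp g f) (comp g' f') = comp (mB g g') (mB f f');
  oB_assoc : forall X Y Z, oB (oB X Y) Z = oB X (oB Y Z);
  mB_assoc : forall f g h, mB (mB f g) h = mB f (mB g h);
  oB_unitl : forall X, oB J X = X;
  oB_unitr : forall X, oB X J = X;
  mB_unitl : forall f, mB (idm J) f = f;
  mB_unitr : forall f, mB f (idm J) = f;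

  delta : Mor;
  varpi : Mor;
  tau : Mor;
  zeta : Ob -> Ob -> Ob -> Ob -> Mor;
  dom_delta : dom delta = I;  cod_delta : cod delta = oB I I;
  dom_varpi : dom varpi = oO J J;  cod_varpi : cod varpi = J;
  dom_tau : dom tau = I;  cod_tau : cod tau = J;
  dom_zeta : forall A B C D, dom (zeta A B C D) = oO (oB A B) (oB C D);
  cod_zeta : forall A B C D, cod (zeta A B C D) = oB (oO A C) (oO B D);
  zeta_nat : forall f1 f2 f3 f4,
    comp (zeta (cod f1) (cod f2) (cod f3) (cod f4)) (mO (mB f1 f2) (mB f3 f4))
    = comp (mB (mO f1 f3) (mO f2 f4)) (zeta (dom f1) (dom f2) (dom f3) (dom f4));

  varpi_assoc : comp varpi (mO varpi (idm J)) = comp varpi (mO (idm J) varpi);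
  varpi_unitl : comp varpi (mO tau (idm J)) = idm J;
  varpi_unitr : comp varpi (mO (idm J) tau) = idm J;
  delta_coassoc : comp (mB delta (idm I)) delta = comp (mB (idm I) delta) delta;
  delta_counitl : comp (mB tau (idm I)) delta = idm I;
  delta_counitr : comp (mB (idm I) tau) delta = idm I;

  zeta_assoc1 : forall A B C D E F,
    comp (zeta A B (oO C E) (oO D F)) (mO (idm (oB A B)) (zeta C D E F))
    = comp (zeta (oO A C) (oO B D) E F) (mO (zeta A B C D) (idm (oB E F)));
  zeta_assoc2 : forall A B C D E F,
    comp (mB (idm (oO A D)) (zeta B C E F)) (zeta A (oB B C) D (oB E F))
    = comp (mB (zeta A B D E) (idm (oO C F))) (zeta (oB A B) C (oB D E) F);
  zeta_delta_l : forall A B,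
    comp (zeta I I A B) (mO delta (idm (oB A B))) = idm (oB A B);
  zeta_delta_r : forall A B,
    comp (zeta A B I I) (mO (idm (oB A B)) delta) = idm (oB A B);
  zeta_varpi_l : forall A B,
    comp (mB varpi (idm (oO A B))) (zeta J A J B) = idm (oO A B);
  zeta_varpi_r : forall A B,
    comp (mB (idm (oO A B)) varpi) (zeta A J B J) = idm (oO A B)
}.

Arguments dom {d} _.
Arguments cod {d} _.
Arguments idm {d} _.
Arguments comp {d} _ _.
Arguments oO {d} _ _.
Arguments mO {d} _ _.
Arguments oB {d} _ _.
Arguments mB {d} _ _.
Arguments I {d}.
Arguments J {d}.
Arguments delta {d}.
Arguments varpi {d}.
Arguments tau {d}.
Arguments zeta {d} _ _ _ _.

Section Bimonoids.
Context {d : Duoidal} (A : Ob d) (mu eta Delta eps : Mor d).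

Definition is_monoid : Prop :=
  dom mu = oO A A /\ cod mu = A /\ dom eta = I /\ cod eta = A /\
  comp mu (mO mu (idm A)) = comp mu (mO (idm A) mu) /\
  comp mu (mO eta (idm A)) = idm A /\
  comp mu (mO (idm A) eta) = idm A.

Definition is_comonoid : Prop :=
  dom Delta = A /\ cod Delta = oB A A /\ dom eps = A /\ cod eps = J /\
  comp (mB Delta (idm A)) Delta = comp (mB (idm A) Delta) Delta /\
  comp (mB eps (idm A)) Delta = idm A /\
  comp (mB (idm A) eps) Delta = idm A.

Definition e_ : Mor d := comp Delta eta.
Definition mubar : Mor d := comp eps mu.

Definition WB : Prop :=
  comp Delta mu = comp (mB mu mu) (comp (zeta A A A A) (mO Delta Delta)).

Definition RRU : Prop :=
  let iI := idm (@I d) in let iA := idm A in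
  comp (mB iI (mB iA (mB mu iA)))
   (comp (mB (zeta I A (oB I A) A) iA)
    (comp (mB (mO (mB iI iA) (mB iI e_)) iA)
     (comp (mB (mO (mB iI iA) delta) iA)
      (comp (mB iI e_) delta))))
  = comp (mB iI (mB iA Delta)) (comp (mB iI Delta) (comp (mB iI eta) delta)).

Definition LRU : Prop :=
  let iI := idm (@I d) in let iA := idm A in
  comp (mB iA (mB mu (mB iA iI)))
   (comp (mB iA (zeta A I A (oB A I)))
    (comp (mB iA (mO (mB iA iI) (mB e_ iI)))
     (comp (mB iA (mO (mB iA iI) delta))
      (comp (mB e_ iI) delta))))
  = comp (mB Delta (mB iA iI)) (comp (mB Delta iI) (comp (mB eta iI) delta)).

Definition LRC : Prop :=
  let iJ := idm (@J d) in let iA := idm A in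
  comp varpi
   (comp (mO iJ mubar)
    (comp (mO (mB varpi (mO iJ iA)) iA)
     (comp (mO (mB (mO iJ mubar) (mO iJ iA)) iA)
      (comp (mO (zeta (oO J A) J A A) iA)
       (mO iJ (mO iA (mO Delta iA)))))))
  = comp varpi (comp (mO iJ eps) (comp (mO iJ mu) (mO iJ (mO iA mu)))).

Definition LLC : Prop :=
  let iJ := idm (@J d) in let iA := idm A in
  comp varpi
   (comp (mO iJ mubar)
    (comp (mO (mB (mO iJ iA) varpi) iA)
     (comp (mO (mB (mO iJ iA) (mO iJ mubar)) iA)
      (comp (mO (zeta J (oO J A) A A) iA)
       (mO iJ (mO iA (mO Delta iA)))))))
  = comp varpi (comp (mO iJ eps) (comp (mO iJ mu) (mO iJ (mO iA mu)))).

Definition right_weak_bimonoid : Prop := WB /\ RRU /\ LRU /\ LRC /\ LLC.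

End Bimonoids.

(* Main.v *)
Require Import Defs.
From Stdlib Require Import Setoid.

Ltac onorm := repeat progress (rewrite ?oO_assoc, ?oB_assoc, ?oO_unitl, ?oO_unitr, ?oB_unitl, ?oB_unitr).

Ltac dc :=
  repeat first
   [ rewrite dom_idm | rewrite cod_idm | rewrite dom_mO | rewrite cod_mO
   | rewrite dom_mB | rewrite cod_mB | rewrite dom_zeta | rewrite cod_zeta
   | rewrite dom_delta | rewrite cod_delta | rewrite dom_varpi | rewrite cod_varpi
   | rewrite dom_tau | rewrite cod_tau
   | match goal with H : dom _ = _ |- _ => rewrite H end
   | match goal with H : cod _ = _ |- _ => rewrite H end
   | (rewrite dom_comp; [| solve [dc]])
   | (rewrite cod_comp; [| solve [dc]]) ];
  onorm; reflexivity.

Lemma idr {d : Duoidal} (f : Mor d) X : dom f = X -> comp f (idm X) = f.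
Proof. intros <-; apply comp_idm_r. Qed.
Lemma idl {d : Duoidal} (f : Mor d) X : cod f = X -> comp (idm X) f = f.
Proof. intros <-; apply comp_idm_l. Qed.
Lemma cA {d : Duoidal} (h g f : Mor d) : cod f = dom g -> cod g = dom h ->
  comp h (comp g f) = comp (comp h g) f.
Proof. apply comp_assoc. Qed.
Lemma mBl {d : Duoidal} (g f : Mor d) X : cod f = dom g ->
  mB (comp g f) (idm X) = comp (mB g (idm X)) (mB f (idm X)).
Proof. intros H. rewrite <- mB_comp; [| exact H | dc]. now rewrite idl by dc. Qed.
Lemma mBr {d : Duoidal} (g f : Mor d) X : cod f = dom g ->
  mB (idm X) (comp g f) = comp (mB (idm X) g) (mB (idm X) f).
Proof. intros H. rewrite <- mB_comp; [| dc | exact H]. now rewrite idl by dc. Qed.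
Lemma mOl {d : Duoidal} (g f : Mor d) X : cod f = dom g ->
  mO (comp g f) (idm X) = comp (mO g (idm X)) (mO f (idm X)).
Proof. intros H. rewrite <- mO_comp; [| exact H | dc]. now rewrite idl by dc. Qed.
Lemma mOr {d : Duoidal} (g f : Mor d) X : cod f = dom g ->
  mO (idm X) (comp g f) = comp (mO (idm X) g) (mO (idm X) f).
Proof. intros H. rewrite <- mO_comp; [| dc | exact H]. now rewrite idl by dc. Qed.
Lemma mB_split {d : Duoidal} (f g : Mor d) :
  mB f g = comp (mB f (idm (cod g))) (mB (idm (dom f)) g).
Proof. rewrite <- mB_comp by dc. now rewrite idr, idl by dc. Qed.
Lemma mB_split' {d : Duoidal} (f g : Mor d) :
  mB f g = comp (mB (idm (cod f)) g) (mB f (idm (dom g))).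
Proof. rewrite <- mB_comp by dc. now rewrite idr, idl by dc. Qed.
Lemma mO_split {d : Duoidal} (f g : Mor d) :
  mO f g = comp (mO f (idm (cod g))) (mO (idm (dom f)) g).
Proof. rewrite <- mO_comp by dc. now rewrite idr, idl by dc. Qed.
Lemma mO_split' {d : Duoidal} (f g : Mor d) :
  mO f g = comp (mO (idm (cod f)) g) (mO f (idm (dom g))).
Proof. rewrite <- mO_comp by dc. now rewrite idr, idl by dc. Qed.

Lemma absorbO_l {d : Duoidal} (f g : Mor d) X : cod f = X -> dom g = I ->
  comp (mO (idm X) g) f = mO f g.
Proof. intros H1 H2. rewrite <- (mO_unitr _ f) at 1. rewrite <- mO_comp by dc.
  now rewrite idl, idr by dc. Qed.

Lemma pureRRU {d : Duoidal} :
  let iI := @idm d I in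
  let D3 := comp (mB iI delta) delta in
  comp (mB (zeta I I (oB I I) I) iI) (comp (mB (mO (idm (oB I I)) D3) iI) D3)
  = comp (mB iI D3) delta.
Proof.
  intros iI D3. subst iI D3.
  rewrite <- delta_coassoc at 2.
  rewrite (cA (mB (mO _ _) _)) by dc.
  rewrite <- mB_comp by dc.
  rewrite (cA (mB (zeta _ _ _ _) _)) by dc.
  rewrite <- mB_comp by dc.
  rewrite !idr by dc.
  rewrite (absorbO_l delta) by dc.
  rewrite (mO_split delta), dom_delta, mO_unitl.
  replace (cod (comp (mB (idm I) delta) delta)) with (oB (oB (@I d) I) I) by dc.
  rewrite cA by dc. rewrite zeta_delta_l. rewrite idl by dc.
  rewrite mBl by dc. rewrite <- cA by dc. rewrite delta_coassoc.
  rewrite mB_assoc. rewrite cA by dc. rewrite <- mBr by dc. rewrite delta_coassoc. reflexivity.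
Qed.

Lemma zeta_nat' {d : Duoidal} (f1 f2 f3 f4 : Mor d) X1 X2 X3 X4 Y1 Y2 Y3 Y4 :
  cod f1 = X1 -> cod f2 = X2 -> cod f3 = X3 -> cod f4 = X4 ->
  dom f1 = Y1 -> dom f2 = Y2 -> dom f3 = Y3 -> dom f4 = Y4 ->
  comp (zeta X1 X2 X3 X4) (mO (mB f1 f2) (mB f3 f4))
  = comp (mB (mO f1 f3) (mO f2 f4)) (zeta Y1 Y2 Y3 Y4).
Proof. intros <- <- <- <- <- <- <- <-. apply zeta_nat. Qed.

Lemma mB_compl {d : Duoidal} (g f h : Mor d) : cod f = dom g ->
  mB (comp g f) h = comp (mB g h) (mB f (idm (dom h))).
Proof. intros H. rewrite <- mB_comp by dc. now rewrite idr by dc. Qed.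

Lemma stepA {d : Duoidal} (A : Ob d) eta D : dom eta = I -> cod eta = A ->
  dom D = I -> cod D = oB I (oB I I) ->
  comp (mB (mO (idm (oB I A)) (comp (mB (idm I) (mB eta eta)) D)) (idm A))
       (comp (mB (idm I) (mB eta eta)) D)
  = comp (mB (mO (mB (idm I) eta) (mB (idm I) (mB eta eta))) eta)
         (comp (mB (mO (idm (oB I I)) D) (idm I)) D).
Proof.
  intros deta ceta dD cD.
  rewrite <- mB_assoc at 2. rewrite cA by dc. rewrite <- mB_comp by dc.
  rewrite (idl eta) by dc. rewrite absorbO_l by dc.
  rewrite <- (idr (mB (idm I) eta) (oB I I)) at 1 by dc.
  rewrite mO_comp by dc.
  rewrite mB_compl by dc. rewrite deta. rewrite <- cA by dc. reflexivity.
Qed.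

Lemma mu_eta_eta {d : Duoidal} (A : Ob d) mu eta : dom mu = oO A A -> cod mu = A ->
  dom eta = I -> cod eta = A -> comp mu (mO eta (idm A)) = idm A ->
  comp mu (mO eta eta) = eta.
Proof.
  intros dmu cmu deta ceta mul.
  rewrite mO_split, deta, mO_unitl, ceta. rewrite cA by dc. rewrite mul. apply idl; dc.
Qed.

Lemma stepB {d : Duoidal} (A : Ob d) mu eta : dom mu = oO A A -> cod mu = A ->
  dom eta = I -> cod eta = A -> comp mu (mO eta (idm A)) = idm A ->
  comp (mB (idm I) (mB (idm A) (mB mu (idm A))))
    (comp (mB (zeta I A (oB I A) A) (idm A))
       (mB (mO (mB (idm I) eta) (mB (idm I) (mB eta eta))) eta))
  = comp (mB (idm I) (mB eta (mB eta eta))) (mB (zeta I I (oB I I) I) (idm I)).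
Proof.
  intros dmu cmu deta ceta mul.
  rewrite <- (mB_comp _ (zeta I A (oB I A) A)) by dc. rewrite (idl eta) by dc.
  rewrite <- (mB_assoc _ (idm I) eta eta).
  rewrite (zeta_nat' (idm I) eta (mB (idm I) eta) eta I A (oB I A) A I I (oB I I) I) by dc.
  rewrite mO_unitl. rewrite mB_compl by dc. rewrite deta.
  rewrite cA by dc. f_equal.
  rewrite !mB_assoc. rewrite <- !mB_comp by dc.
  rewrite (mu_eta_eta A) by assumption. rewrite !idl by dc. reflexivity.
Qed.

Lemma mB_compr {d : Duoidal} (h g f : Mor d) : cod f = dom g ->
  mB h (comp g f) = comp (mB h g) (mB (idm (dom h)) f).
Proof. intros H. rewrite <- mB_comp by dc. now rewrite idr by dc. Qed.

Lemma stepC {d : Duoidal} (A : Ob d) eta Delta : dom eta = I -> cod eta = A ->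
  dom Delta = A -> cod Delta = oB A A ->
  comp Delta eta = comp (mB eta eta) delta ->
  comp (mB (idm I) (mB (idm A) Delta)) (comp (mB (idm I) Delta) (comp (mB (idm I) eta) delta))
  = comp (mB (idm I) (mB eta (mB eta eta))) (comp (mB (idm I) (comp (mB (idm I) delta) delta)) delta).
Proof.
  intros deta ceta dD cD HDe.
  rewrite (cA (mB (idm I) Delta)) by dc. rewrite <- mBr by dc. rewrite HDe.
  rewrite cA by dc. rewrite <- mBr by dc.
  rewrite (cA (mB (idm A) Delta)) by dc. rewrite <- mB_comp by dc.
  rewrite HDe, idl by dc. rewrite (mB_compr eta) by dc. rewrite deta.
  rewrite <- (cA (mB eta (mB eta eta))) by dc. rewrite (mBr (mB eta (mB eta eta))) by dc.
  rewrite <- cA by dc. reflexivity.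
Qed.

Lemma RRU_pf {d : Duoidal} (A : Ob d) mu eta Delta eps :
  is_monoid A mu eta -> is_comonoid A Delta eps ->
  comp Delta eta = comp (mB eta eta) delta ->
  RRU A mu eta Delta.
Proof.
  intros [dmu [cmu [deta [ceta [mas [mul mur]]]]]] [dD [cD [de [ce [cas [cul cur]]]]]] HDe.
  unfold RRU, e_. cbv zeta. rewrite HDe.
  rewrite !mB_idm.
  rewrite (cA (mB (mO _ (mB _ _)) _) (mB (mO _ delta) _)) by dc.
  rewrite <- mBl by dc. rewrite <- mOr by dc.
  rewrite mBr by dc. rewrite <- (cA (mB (idm I) (mB eta eta))) by dc.
  rewrite stepA by dc.
  rewrite (cA (mB (zeta _ _ _ _) _)) by dc. rewrite (cA (mB (idm I) (mB (idm A) (mB mu (idm A))))) by dc.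
  rewrite (stepB A) by assumption.
  rewrite (stepC A) by assumption.
  rewrite <- cA by dc. f_equal. apply pureRRU.
Qed.

Lemma absorbO_l' {d : Duoidal} (f g : Mor d) X : cod f = X -> dom g = I ->
  comp (mO (idm X) g) f = mO f g.
Proof. apply absorbO_l. Qed.

Lemma pureLRU {d : Duoidal} :
  let iI := @idm d I in
  let D3 := comp (mB delta iI) delta in
  comp (mB iI (zeta I I I (oB I I))) (comp (mB iI (mO (idm (oB I I)) D3)) D3)
  = comp (mB D3 iI) delta.
Proof.
  intros iI D3. subst iI D3.
  rewrite delta_coassoc at 2.
  rewrite (cA (mB _ (mO _ _))) by dc.
  rewrite <- mB_comp by dc.
  rewrite (cA (mB _ (zeta _ _ _ _))) by dc.
  rewrite <- mB_comp by dc.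
  rewrite !idr by dc.
  rewrite (absorbO_l delta) by dc.
  rewrite (mO_split delta), dom_delta, mO_unitl.
  replace (cod (comp (mB delta (idm I)) delta)) with (oB (@I d) (oB I I)) by dc.
  rewrite cA by dc. rewrite zeta_delta_l. rewrite idl by dc.
  rewrite (mBr (mB delta (idm I))) by dc. rewrite <- cA by dc.
  rewrite <- delta_coassoc. rewrite <- (mB_assoc _ (idm I) delta (idm I)).
  rewrite cA by dc. rewrite <- mBl by dc. rewrite <- delta_coassoc.
  rewrite (mBl (mB delta (idm I))) by dc. reflexivity. Qed.

Lemma stepA' {d : Duoidal} (A : Ob d) eta D : dom eta = I -> cod eta = A ->
  dom D = I -> cod D = oB I (oB I I) ->
  comp (mB (idm A) (mO (idm (oB A I)) (comp (mB (mB eta eta) (idm I)) D)))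
       (comp (mB (mB eta eta) (idm I)) D)
  = comp (mB eta (mO (mB eta (idm I)) (mB (mB eta eta) (idm I))))
         (comp (mB (idm I) (mO (idm (oB I I)) D)) D).
Proof.
  intros deta ceta dD cD.
  rewrite mB_assoc at 2. rewrite cA by dc. rewrite <- mB_comp by dc.
  rewrite (idl eta) by dc. rewrite absorbO_l by dc.
  rewrite <- (idr (mB eta (idm I)) (oB I I)) at 1 by dc.
  rewrite mO_comp by dc.
  rewrite (mB_compr eta) by dc. rewrite deta. rewrite <- cA by dc. reflexivity.
Qed.

Lemma stepB' {d : Duoidal} (A : Ob d) mu eta : dom mu = oO A A -> cod mu = A ->
  dom eta = I -> cod eta = A -> comp mu (mO eta (idm A)) = idm A ->
  comp (mB (idm A) (mB mu (idm (oB A I))))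
    (comp (mB (idm A) (zeta A I A (oB A I)))
       (mB eta (mO (mB eta (idm I)) (mB (mB eta eta) (idm I)))))
  = comp (mB eta (mB eta (mB eta (idm I)))) (mB (idm I) (zeta I I I (oB I I))).
Proof.
  intros dmu cmu deta ceta mul.
  rewrite <- (mB_comp _ (idm A) eta) by dc. rewrite (idl eta) by dc.
  rewrite (mB_assoc _ eta eta (idm I)).
  rewrite (zeta_nat' eta (idm I) eta (mB eta (idm I)) A I A (oB A I) I I I (oB I I)) by dc.
  rewrite mO_unitl. rewrite (mB_compr eta) by dc. rewrite deta.
  rewrite cA by dc. f_equal.
  rewrite <- !mB_comp by dc.
  rewrite (mu_eta_eta A) by assumption. rewrite !idl by dc. reflexivity.
Qed.

Lemma stepC' {d : Duoidal} (A : Ob d) eta Delta : dom eta = I -> cod eta = A ->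
  dom Delta = A -> cod Delta = oB A A ->
  comp Delta eta = comp (mB eta eta) delta ->
  comp (mB Delta (idm (oB A I))) (comp (mB Delta (idm I)) (comp (mB eta (idm I)) delta))
  = comp (mB eta (mB eta (mB eta (idm I)))) (comp (mB (comp (mB delta (idm I)) delta) (idm I)) delta).
Proof.
  intros deta ceta dD cD HDe.
  rewrite <- mB_idm, <- mB_assoc.
  rewrite (cA (mB Delta (idm I))) by dc. rewrite <- mBl by dc. rewrite HDe.
  rewrite cA by dc. rewrite <- mBl by dc.
  rewrite (cA (mB Delta (idm A))) by dc. rewrite <- mB_comp by dc.
  rewrite HDe, (idl eta) by dc. rewrite (mB_compl (mB eta eta) delta eta) by dc. rewrite deta.
  rewrite <- (cA (mB (mB eta eta) eta)) by dc. rewrite (mBl (mB (mB eta eta) eta)) by dc.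
  rewrite <- cA by dc. rewrite !mB_assoc. reflexivity.
Qed.

Lemma LRU_pf {d : Duoidal} (A : Ob d) mu eta Delta eps :
  is_monoid A mu eta -> is_comonoid A Delta eps ->
  comp Delta eta = comp (mB eta eta) delta ->
  LRU A mu eta Delta.
Proof.
  intros [dmu [cmu [deta [ceta [mas [mul mur]]]]]] [dD [cD [de [ce [cas [cul cur]]]]]] HDe.
  unfold LRU, e_. cbv zeta. rewrite HDe.
  rewrite !mB_idm.
  rewrite (cA (mB _ (mO _ (mB _ _))) (mB _ (mO _ delta))) by dc.
  rewrite <- mBr by dc. rewrite <- mOr by dc.
  rewrite mBl by dc. rewrite <- (cA (mB (mB eta eta) (idm I))) by dc.
  rewrite stepA' by dc.
  rewrite (cA (mB (idm A) (zeta _ _ _ _))) by dc. rewrite (cA (mB (idm A) (mB mu _))) by dc.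
  rewrite (stepB' A) by assumption.
  rewrite (stepC' A) by assumption.
  rewrite <- cA by dc. f_equal. apply pureLRU.
Qed.

Lemma mB_compl2 {d : Duoidal} (g f h : Mor d) : cod f = dom g ->
  mB (comp g f) h = comp (mB g (idm (cod h))) (mB f h).
Proof. intros H. rewrite <- mB_comp by dc. now rewrite idl by dc. Qed.
Lemma mO_compl2 {d : Duoidal} (g f h : Mor d) : cod f = dom g ->
  mO (comp g f) h = comp (mO g (idm (cod h))) (mO f h).
Proof. intros H. rewrite <- mO_comp by dc. now rewrite idl by dc. Qed.
Lemma mB_compr2 {d : Duoidal} (h g f : Mor d) : cod f = dom g ->
  mB h (comp g f) = comp (mB (idm (cod h)) g) (mB h f).
Proof. intros H. rewrite <- mB_comp by dc. now rewrite idl by dc. Qed.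
Lemma mO_compr2 {d : Duoidal} (h g f : Mor d) : cod f = dom g ->
  mO h (comp g f) = comp (mO (idm (cod h)) g) (mO h f).
Proof. intros H. rewrite <- mO_comp by dc. now rewrite idl by dc. Qed.
Lemma slideB {d : Duoidal} (f K : Mor d) X : cod K = J -> dom f = X ->
  comp f (mB K (idm X)) = mB K f.
Proof. intros H1 H2. rewrite <- (mB_unitl _ f) at 1. rewrite <- mB_comp by dc.
  now rewrite idl, idr by dc. Qed.
Lemma slideB' {d : Duoidal} (f K : Mor d) X : cod K = J -> dom f = X ->
  comp f (mB (idm X) K) = mB f K.
Proof. intros H1 H2. rewrite <- (mB_unitr _ f) at 1. rewrite <- mB_comp by dc.
  now rewrite idl, idr by dc. Qed.
Lemma eps_eps {d : Duoidal} (A : Ob d) Delta eps :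
  dom Delta = A -> cod Delta = oB A A -> dom eps = A -> cod eps = J ->
  comp (mB eps (idm A)) Delta = idm A -> comp (mB eps eps) Delta = eps.
Proof. intros dD cD de ce cul.
  rewrite (mB_split' eps eps), ce, de, mB_unitl.
  rewrite <- cA by dc. rewrite cul. apply idr; dc. Qed.
Lemma midLRC {d : Duoidal} :
  comp (mB (comp varpi (mO (idm J) varpi)) (idm (oO J J))) (zeta (oO J J) J J J)
  = mO (@varpi d) (idm J).
Proof.
  rewrite <- varpi_assoc. rewrite mB_compl2 by dc. rewrite cod_idm.
  rewrite <- cA by dc. rewrite <- mO_idm.
  rewrite <- (zeta_nat' varpi (idm J) (idm J) (idm J) J J J J (oO J J) J J J) by dc.
  rewrite mB_unitr, mB_idm, oB_unitl. rewrite cA by dc. rewrite mO_idm, zeta_varpi_l.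
  apply idl; dc.
Qed.

Lemma brLRC {d : Duoidal} (A : Ob d) Delta eps :
  dom Delta = A -> cod Delta = oB A A -> dom eps = A -> cod eps = J ->
  comp (mB eps (idm A)) Delta = idm A ->
  let iJ := @idm d J in let iA := idm A in
  comp (mO iJ (mO eps eps))
   (comp (mO (mB varpi (idm (oO J A))) iA)
    (comp (mO (mB (comp (mO iJ varpi) (mO iJ (mO eps eps))) (idm (oO J A))) iA)
     (comp (mO (zeta (oO J A) J A A) iA)
      (mO iJ (mO iA (mO Delta iA))))))
  = comp (mO varpi (idm (oO J J))) (mO iJ (mO eps (mO eps eps))).
Proof.
  intros dD cD de ce cul iJ iA. subst iJ iA.
  rewrite <- !(mO_assoc _ (idm J) eps eps).
  rewrite (cA (mO (mB varpi _) _)) by dc. rewrite <- mOl by dc.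
  rewrite <- mBl by dc.
  rewrite (cA (mO (mO (idm J) eps) eps)) by dc. rewrite <- mO_comp by dc. rewrite (idr eps) by dc.
  rewrite slideB by dc. rewrite (cA varpi) by dc. rewrite mB_compl2 by dc. rewrite cod_mO, cod_idm, ce.
  rewrite (cA (mO (comp _ _) eps)) by dc. rewrite <- mO_comp by dc. rewrite (idr eps) by dc.
  rewrite <- (cA (mB (comp varpi _) _)) by dc.
  rewrite <- (zeta_nat' (mO (idm J) eps) (idm J) eps eps (oO J J) J J J (oO J A) J A A) by dc.
  rewrite mB_unitr. rewrite <- (mO_assoc _ (idm J) (idm A) (mO Delta (idm A))), <- (mO_assoc _ (mO (idm J) (idm A)) Delta (idm A)), mO_idm.
  rewrite <- mO_comp by dc. rewrite (idr eps) by dc.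
  rewrite <- !cA by dc. rewrite <- (mO_comp _ (mO (idm J) eps)) by dc.
  rewrite (idr (mO (idm J) eps)) by dc. rewrite (eps_eps A) by assumption.
  rewrite cA by dc. rewrite midLRC. rewrite mO_compl2 by dc. rewrite ce.
  rewrite mO_assoc, mO_idm, !mO_assoc. reflexivity.
Qed.

Lemma assoc4 {d : Duoidal} :
  comp varpi (comp (mO (idm J) varpi) (mO varpi (idm (oO J J))))
  = comp (@varpi d) (comp (mO (idm J) varpi) (mO (idm J) (mO (idm J) varpi))).
Proof.
  rewrite <- mO_comp by dc. rewrite idl, idr by dc.
  rewrite (mO_split varpi varpi), cod_varpi, dom_varpi.
  rewrite cA by dc. rewrite varpi_assoc. rewrite <- cA by dc.
  rewrite <- mO_idm, mO_assoc. reflexivity.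
Qed.

Lemma rhsLRC {d : Duoidal} (A : Ob d) mu eps :
  dom mu = oO A A -> cod mu = A -> dom eps = A -> cod eps = J ->
  comp eps mu = comp varpi (mO eps eps) ->
  comp (mO (idm J) eps) (comp (mO (idm J) mu) (mO (idm J) (mO (idm A) mu)))
  = comp (mO (idm J) varpi) (comp (mO (idm J) (mO (idm J) varpi)) (mO (idm J) (mO eps (mO eps eps)))).
Proof.
  intros dmu cmu de ce Hem.
  rewrite cA by dc. rewrite <- !mOr by dc. rewrite Hem.
  rewrite <- cA by dc. rewrite <- mO_comp by dc. rewrite idr by dc. rewrite Hem.
  rewrite (mO_compr2 eps) by dc. rewrite ce. reflexivity.
Qed.

Lemma LRC_pf {d : Duoidal} (A : Ob d) mu eta Delta eps :
  is_monoid A mu eta -> is_comonoid A Delta eps ->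
  comp eps mu = comp varpi (mO eps eps) ->
  LRC A mu Delta eps.
Proof.
  intros [dmu [cmu [deta [ceta [mas [mul mur]]]]]] [dD [cD [de [ce [cas [cul cur]]]]]] Hem.
  unfold LRC. rewrite (rhsLRC A) by assumption.
  unfold mubar. cbv zeta. rewrite Hem.
  rewrite !mO_idm. rewrite !mOr by dc.
  rewrite <- (cA (mO (idm J) varpi)) by dc. rewrite (brLRC A) by assumption.
  rewrite !(cA (mO (idm J) varpi) _ (mO (idm J) (mO eps (mO eps eps)))) by dc. rewrite !(cA varpi _ (mO (idm J) (mO eps (mO eps eps)))) by dc. rewrite assoc4. reflexivity.
Qed.

Lemma midLLC {d : Duoidal} :
  comp (mB (idm (oO J J)) (comp varpi (mO (idm J) varpi))) (zeta J (oO J J) J J)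
  = mO (@varpi d) (idm J).
Proof.
  rewrite <- varpi_assoc. rewrite mB_compr2 by dc. rewrite cod_idm.
  rewrite <- cA by dc. rewrite <- mO_idm.
  rewrite <- (zeta_nat' (idm J) varpi (idm J) (idm J) J J J J J (oO J J) J J) by dc.
  rewrite mB_unitl, mB_idm, oB_unitl. rewrite cA by dc. rewrite mO_idm, zeta_varpi_r.
  apply idl; dc.
Qed.

Lemma brLLC {d : Duoidal} (A : Ob d) Delta eps :
  dom Delta = A -> cod Delta = oB A A -> dom eps = A -> cod eps = J ->
  comp (mB eps (idm A)) Delta = idm A ->
  let iJ := @idm d J in let iA := idm A in
  comp (mO iJ (mO eps eps))
   (comp (mO (mB (idm (oO J A)) varpi) iA)
    (comp (mO (mB (idm (oO J A)) (comp (mO iJ varpi) (mO iJ (mO eps eps)))) iA)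
     (comp (mO (zeta J (oO J A) A A) iA)
      (mO iJ (mO iA (mO Delta iA))))))
  = comp (mO varpi (idm (oO J J))) (mO iJ (mO eps (mO eps eps))).
Proof.
  intros dD cD de ce cul iJ iA. subst iJ iA.
  rewrite <- !(mO_assoc _ (idm J) eps eps).
  rewrite (cA (mO (mB _ varpi) _)) by dc. rewrite <- mOl by dc.
  rewrite <- mBr by dc.
  rewrite (cA (mO (mO (idm J) eps) eps)) by dc. rewrite <- mO_comp by dc. rewrite (idr eps) by dc.
  rewrite slideB' by dc. rewrite (cA varpi) by dc. rewrite mB_compr2 by dc. rewrite cod_mO, cod_idm, ce.
  rewrite (cA (mO (comp _ _) eps)) by dc. rewrite <- mO_comp by dc. rewrite (idr eps) by dc.
  rewrite <- (cA (mB _ (comp varpi _))) by dc.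
  rewrite <- (zeta_nat' (idm J) (mO (idm J) eps) eps eps J (oO J J) J J J (oO J A) A A) by dc.
  rewrite mB_unitl. rewrite <- (mO_assoc _ (idm J) (idm A) (mO Delta (idm A))), <- (mO_assoc _ (mO (idm J) (idm A)) Delta (idm A)), mO_idm.
  rewrite <- mO_comp by dc. rewrite (idr eps) by dc.
  rewrite <- !cA by dc. rewrite <- (mO_comp _ (mO (idm J) eps)) by dc.
  rewrite (idr (mO (idm J) eps)) by dc. rewrite (eps_eps A) by assumption.
  rewrite cA by dc. rewrite midLLC. rewrite mO_compl2 by dc. rewrite ce.
  rewrite mO_assoc, mO_idm, !mO_assoc. reflexivity.
Qed.

Lemma LLC_pf {d : Duoidal} (A : Ob d) mu eta Delta eps :
  is_monoid A mu eta -> is_comonoid A Delta eps ->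
  comp eps mu = comp varpi (mO eps eps) ->
  LLC A mu Delta eps.
Proof.
  intros [dmu [cmu [deta [ceta [mas [mul mur]]]]]] [dD [cD [de [ce [cas [cul cur]]]]]] Hem.
  unfold LLC. rewrite (rhsLRC A) by assumption.
  unfold mubar. cbv zeta. rewrite Hem.
  rewrite !mO_idm. rewrite !mOr by dc.
  rewrite <- (cA (mO (idm J) varpi)) by dc. rewrite (brLLC A) by assumption.
  rewrite !(cA (mO (idm J) varpi) _ (mO (idm J) (mO eps (mO eps eps)))) by dc. rewrite !(cA varpi _ (mO (idm J) (mO eps (mO eps eps)))) by dc. rewrite assoc4. reflexivity.
Qed.

Theorem proposition2p2 (d : Duoidal) (A : Ob d) (mu eta Delta eps : Mor d) :
  is_monoid A mu eta ->
  is_comonoid A Delta eps ->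
  comp Delta mu = comp (mB mu mu) (comp (zeta A A A A) (mO Delta Delta)) ->
  comp Delta eta = comp (mB eta eta) delta ->
  comp eps mu = comp varpi (mO eps eps) ->
  comp eps eta = tau ->
  right_weak_bimonoid A mu eta Delta eps.
Proof.
  intros Hm Hc HWB HDe Hem Hee.
  unfold right_weak_bimonoid.
  split; [exact HWB|].
  split; [apply (RRU_pf A mu eta Delta eps); assumption|].
  split; [apply (LRU_pf A mu eta Delta eps); assumption|].
  split; [apply (LRC_pf A mu eta Delta eps); assumption|].
  apply (LLC_pf A mu eta Delta eps); assumption.
Qed.
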